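(* Let $S=\{(x_i,y_i)\}_{i=1}^n$ be a training set, $\{f_\theta\}$ a parameterized family of classifiers, $1\le k\le n$, and let $\hat\theta\in\arg\min_\theta L_{\textrm{close-}k}(\{\ell(y_i,f_\theta(x_i))\}_{i=1}^n)$. Then $$L_{0-1}(\hat\theta)\le \min_\theta L_{0-1}(\{(y_i,f_\theta(x_i))\}_{i=1}^n) + k - 1,$$ where $L_{0-1}(\theta)$ denotes the number of training examples misclassified by $f_\theta$.
   Context: Binary classification with labels $y\in\{-1,+1\}$ and real-valued predictions. An individual loss $\ell(y,f(x))\ge 0$ comes with a threshold $T$ such that an example is correctly classified iff its individual loss is below $T$ (e.g. logistic loss with $T=\log 2$, hinge loss with $T=1$). Given individual losses $\ell_1,\dots,\ell_n$, let $\ell_{[i]}$ be the individual loss with the $i$-th smallest value of $|\ell_j-T|$. For a constant $M$ at least as large as every individual loss that occurs, the close-$k$ aggregate loss is $L_{\textrm{close-}k}(\{\ell_i\})=\sum_{i=1}^n c_i$ with $c_i=\ell_{[i]}$ if $i\le k$, $c_i=0$ if $i>k$ and $\ell_{[i]}$ is correctly classified, and $c_i=M$ if $i>k$ and $\ell_{[i]}$ is incorrectly classified. $L_{0-1}(\{(y_i,f_\theta(x_i))\})$ is the number of $i$ with $y_i\ne\mathrm{sgn} f_\theta(x_i)$. *)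

(* Defs.v *)
From mathcomp Require Import all_boot all_order all_algebra.
Set Implicit Arguments. Unset Strict Implicit. Unset Printing Implicit Defensive.
Import Order.TTheory GRing.Theory Num.Theory.
Local Open Scope ring_scope.

(* The losses are sorted (stably) by
   increasing |l - T|; the i-th one (0-based, i.e. position i+1) contributes
   itself if i < k, 0 if it is correctly classified (l < T), and M otherwise. *)
Definition close_k {R : realDomainType} (T M : R) (k : nat) (ls : seq R) : R :=
  let s := sort (fun a b : R => `|a - T| <= `|b - T|) ls in
  \sum_(i < size s) (if (i < k)%N then s`_i else if s`_i < T then 0 else M).

Definition losses {R : realDomainType} (ell : R -> R -> R) (n : nat)
  (y : 'I_n -> R) (p : 'I_n -> R) : seq R :=
  [seq ell (y i) (p i) | i <- enum 'I_n].

Definition L01 {R : realDomainType} (n : nat) (y : 'I_n -> R) (p : 'I_n -> R) : nat :=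
  #|[set i : 'I_n | y i != Num.sg (p i)]|.

(* Main.v *)
Require Import Defs.
From mathcomp Require Import all_boot all_order all_algebra.
From mathcomp Require Import zify ring lra.
Import Order.TTheory GRing.Theory Num.Theory.
Local Open Scope ring_scope.

Lemma count_ord (T : Type) (x0 : T) (a : pred T) (s : seq T) :
  count a s = (\sum_(i < size s) a (nth x0 s i))%N.
Proof.
rewrite -sum1_count (big_nth x0) big_mkord big_mkcond /=.
by apply: eq_bigr => i _; case: (a _).
Qed.

Lemma sum_ltk (N k : nat) : (\sum_(i < N) (i < k)%N <= k)%N.
Proof.
elim: N => [|N IH]; first by rewrite big_ord0.
rewrite big_ord_recr /=.
have : (\sum_(i < N) (i < k)%N = minn N k)%N.
  elim: N {IH} => [|N IH]; first by rewrite big_ord0 min0n.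
  rewrite big_ord_recr /= IH; case: ltnP => h; lia.
move=> ->; case: ltnP => h; lia.
Qed.

Section S.
Variables (R : realFieldType) (T M : R) (k : nat).

Definition term (s : seq R) (i : nat) : R :=
  if (i < k)%N then s`_i else if s`_i < T then 0 else M.

Definition cnt (s : seq R) : nat := count (fun l => ~~ (l < T)) s.

Lemma lower (s : seq R) :
  (forall l, l \in s -> 0 <= l <= M) -> T <= M -> (k <= cnt s)%N ->
  k%:R * T + (cnt s - k)%:R * M <= \sum_(i < size s) term s i.
Proof.
move=> Hs hTM hk.
pose d := (\sum_(i < size s) (~~ (nth 0%R s i < T)%R && ~~ (i < k)%N))%N.
have hd : (cnt s - k <= d)%N.
  have e : cnt s = (\sum_(i < size s) (~~ (nth 0%R s i < T)%R && (i < k)%N) + d)%N.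
    rewrite /cnt (count_ord _ 0) /d -big_split /=; apply: eq_bigr => i _.
    by case: (_ < T); case: (i < k)%N.
  have : (\sum_(i < size s) (~~ (nth 0%R s i < T)%R && (i < k)%N) <= k)%N.
    apply: leq_trans (sum_ltk (size s) k); apply: leq_sum => i _.
    by case: (_ < T); case: (i < k)%N.
  lia.
apply: (@le_trans _ _ (\sum_(i < size s)
   (T * (~~ (nth 0%R s i < T)%R)%:R + (M - T) * (~~ (nth 0%R s i < T)%R && ~~ (i < k)%N)%:R))).
  have e1 : \sum_(i < size s) (~~ (s`_i < T))%:R = (cnt s)%:R :> R.
    by rewrite /cnt (count_ord _ 0) natr_sum.
  have e2 : \sum_(i < size s) (~~ (s`_i < T) && ~~ (i < k)%N)%:R = d%:R :> R.
    by rewrite /d natr_sum.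
  rewrite big_split /= -!mulr_sumr e1 e2.
  rewrite -{2}(subnK hk) natrD.
  have : (cnt s - k)%:R <= d%:R :> R by rewrite ler_nat.
  set a := (cnt s - k)%:R; set b := d%:R => hab.
  have : 0 <= (M - T) * (b - a) by apply: mulr_ge0; lra.
  lra.
apply: ler_sum => i _; rewrite /term.
have /Hs /andP[h0 hM] : nth 0 s i \in s by apply: mem_nth.
case: (ltnP i k) => hik; case: (ltP (s`_i) T) => hl /=; rewrite ?mulr0 ?mulr1 ?addr0 ?add0r //.
all: lra.
Qed.

Lemma upper (s : seq R) :
  (forall l, l \in s -> l <= M) -> 0 < T -> (1 <= k)%N ->
  \sum_(i < size s) term s i < (cnt s)%:R * M + k%:R * T.
Proof.
move=> Hs hT hk.
pose e := (\sum_(i < size s) ((nth 0%R s i < T)%R && (i < k)%N))%N.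
have he : (e <= k)%N.
  apply: leq_trans (sum_ltk (size s) k); apply: leq_sum => i _.
  by case: (_ < T)%R; case: (i < k)%N.
pose G i := M * (~~ (s`_i < T))%:R + T * ((s`_i < T) && (i < k)%N)%:R.
have eG : \sum_(i < size s) G i = (cnt s)%:R * M + e%:R * T.
  have e1 : \sum_(i < size s) (~~ (s`_i < T))%:R = (cnt s)%:R :> R.
    by rewrite /cnt (count_ord _ 0) natr_sum.
  have e2 : \sum_(i < size s) ((s`_i < T) && (i < k)%N)%:R = e%:R :> R.
    by rewrite /e natr_sum.
  rewrite /G big_split /= -!mulr_sumr e1 e2.
  by rewrite mulrC [T * _]mulrC.
have pw : forall i : 'I_(size s), term s i <= G i.
  move=> i; have hM : nth 0 s i <= M by apply/Hs/mem_nth.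
  rewrite /term /G; case: (ltnP i k) => hik; case: (ltP (s`_i) T) => hl /=;
    rewrite ?mulr0 ?mulr1 ?addr0 ?add0r //; lra.
have heR : e%:R * T <= k%:R * T by rewrite ler_pM2r // ler_nat.
case: (boolP [exists i : 'I_(size s), (s`_i < T) && (i < k)%N]).
  case/existsP => i /andP[hl hik].
  apply: (@lt_le_trans _ _ (\sum_(i < size s) G i)); last by rewrite eG; lra.
  rewrite (bigD1 i) // [X in _ < X](bigD1 i) //=; apply: ltr_leD.
    by rewrite /term /G hik hl /= mulr0 add0r mulr1.
  by apply: ler_sum => j _; apply: pw.
move=> hno.
have e0 : e = 0%N.
  apply/eqP; rewrite sum_nat_eq0; apply/forallP => i; apply/implyP => _.
  move: hno; rewrite negb_exists => /forallP /(_ i).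
  by case: (_ && _).
have hkT : 0 < k%:R * T by apply: mulr_gt0; rewrite // ltr0n.
apply: (@le_lt_trans _ _ (\sum_(i < size s) G i)).
  by apply: ler_sum => j _; apply: pw.
rewrite eG e0 mul0r addr0; lra.
Qed.
End S.
Arguments cnt {R}. Arguments term {R}. Arguments lower {R T M k}. Arguments upper {R T M k}.

Lemma card_count n (P : pred 'I_n) : #|[set i | P i]| = count P (enum 'I_n).
Proof. by rewrite cardsE cardE /enum_mem -enumT size_filter filter_predT. Qed.

Theorem lemma2 (R : realFieldType) (X Theta : Type) (n : nat)
  (x : 'I_n -> X) (y : 'I_n -> R) (f : Theta -> X -> R)
  (ell : R -> R -> R) (T M : R) (k : nat) (thetahat : Theta) :
  (forall i, y i = 1 \/ y i = -1) ->
  (forall yy t : R, (yy = 1 \/ yy = -1) -> 0 <= ell yy t) ->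
  (forall yy t : R, (yy = 1 \/ yy = -1) -> (ell yy t < T <-> yy = Num.sg t)) ->
  (forall (th : Theta) (i : 'I_n), ell (y i) (f th (x i)) <= M) ->
  (1 <= k <= n)%N ->
  (forall th : Theta,
      close_k T M k (losses ell y (fun i => f thetahat (x i)))
      <= close_k T M k (losses ell y (fun i => f th (x i)))) ->
  forall th : Theta,
    (L01 y (fun i => f thetahat (x i)) <= L01 y (fun i => f th (x i)) + k - 1)%N.
Proof.
move=> Hy Hnn Hiff HM /andP[hk1 hkn] Hopt th.
pose ls h := losses ell y (fun i => f h (x i)).
have hsz : forall h, size (ls h) = n by move=> h; rewrite size_map size_enum_ord.
have hL : forall h, L01 y (fun i => f h (x i)) = cnt T (ls h).
  move=> h; rewrite /L01 card_count /cnt /ls /losses [in RHS]count_map.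
  apply: eq_count => i /=; apply/idP/idP.
    move=> hne; apply/negP => /(Hiff _ _ (Hy i)) heq; by rewrite heq eqxx in hne.
  move=> /negP hn; apply/eqP => heq; apply: hn; exact/(Hiff _ _ (Hy i)).
have hb : forall h l, l \in ls h -> 0 <= l <= M.
  move=> h l /mapP [i _ ->]; rewrite HM andbT; exact: Hnn.
pose ss h := sort (fun a b : R => `|a - T| <= `|b - T|) (ls h).
have hcl : forall h, close_k T M k (ls h) = \sum_(i < size (ss h)) term T M k (ss h) i.
  by [].
have hcs : forall h, cnt T (ss h) = cnt T (ls h).
  by move=> h; rewrite /cnt; apply/permP; rewrite perm_sort.
have hbs : forall h l, l \in ss h -> 0 <= l <= M.
  by move=> h l; rewrite mem_sort; apply: hb.
rewrite leqNgt; apply/negP => hgt.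
rewrite !hL in hgt.
have hc : (cnt T (ls th) + k <= cnt T (ls thetahat))%N by lia.
have hcle : forall h, (cnt T (ls h) <= n)%N by move=> h; rewrite -(hsz h) count_size.
have hT : 0 < T.
  rewrite ltNge; apply/negP => hT0.
  have : cnt T (ls th) = n.
    rewrite -(hsz th) /cnt -[RHS]count_predT; apply: eq_in_count => l hl /=.
    have /andP[h0 _] := hb _ _ hl; rewrite -leNgt; exact: le_trans hT0 h0.
  have := hcle thetahat; lia.
have hTM : T <= M.
  have : has (fun l => ~~ (l < T)) (ls thetahat).
    by rewrite has_count; exact: leq_trans hk1 (leq_trans (leq_addl _ _) hc).
  case/hasP => l hl; rewrite -leNgt => hTl.
  have /andP[_ hlM] := hb _ _ hl; exact: le_trans hTl hlM.
have hlow := lower (k:=k) (ss thetahat) (hbs thetahat) hTM.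
have hk2 : (k <= cnt T (ss thetahat))%N by rewrite hcs; lia.
have {hlow} := hlow hk2; rewrite hcs => hlow.
have hup := upper (ss th) (fun l hl => proj2 (andP (hbs th l hl))) hT hk1.
rewrite hcs in hup.
have := Hopt th; rewrite !hcl => hopt.
have hM0 : 0 <= M by apply: le_trans hTM; apply: ltW.
have : (cnt T (ls th))%:R * M <= (cnt T (ls thetahat) - k)%:R * M.
  by apply: ler_wpM2r => //; rewrite ler_nat; lia.
set A := \sum_(i < _) term _ _ _ (ss thetahat) _ in hlow hopt.
set B := \sum_(i < _) term _ _ _ (ss th) _ in hup hopt.
move=> h; lra.
Qed.
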